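(* Let $f,g$ be smooth functions on an interval $I\subset\mathbb{R}$ with $\dot f^2+\dot g^2=1$ and $f$ nowhere zero, let $l=l(v)$, $v\in J$, be an arc-length parametrized curve $c$ on the unit sphere $S^2(1)\subset\mathbb{R}^3=\mathrm{span}\{e_1,e_2,e_3\}$ with spherical curvature $\kappa(v)$, and let $M^2: z(u,v)=f(u)\,l(v)+g(u)\,e_4$ (a meridian surface). Assume $M^2$ belongs to the general class, i.e. $\kappa_m(u)\kappa(v)\neq0$, where $\kappa_m=\dot f\ddot g-\dot g\ddot f$. Let $a\neq0$ be a constant. Then $M^2$ has constant mean curvature $\|H\|=a$ if and only if the curve $c$ is a circle on $S^2(1)$ with constant spherical curvature $\kappa\equiv b$ for some constant $b\neq0$, and $f$ satisfies the differential equation $$\bigl(1-\dot f^2-f\ddot f\bigr)^2=(1-\dot f^2)\,(4a^2f^2-b^2).$$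
   Context: $\{e_1,e_2,e_3,e_4\}$ is the standard orthonormal basis of $\mathbb{R}^4$. For the arc-length curve $l(v)$ on $S^2(1)$ set $t=l'$ and let $n$ be the unit vector with $\{t,n,l\}$ orthonormal; the spherical curvature $\kappa$ is defined by $l'=t$, $t'=\kappa n-l$, $n'=-\kappa t$. $\kappa_m$ is the curvature of the meridian $u\mapsto(f(u),g(u))$. $H$ is the mean curvature vector field of $M^2$ in $\mathbb{R}^4$ (half the trace of the second fundamental form) and $\|H\|$ its length. *)

(* Defs.v *)
From Stdlib Require Import Reals.
From Coquelicot Require Import Coquelicot.
Open Scope R_scope.

(* Vectors of R^3 / R^4 are represented as functions nat -> R;
   only the indices 0,1,2 (resp. 0,1,2,3) are meaningful.
   Index i corresponds to the basis vector e_(i+1). *)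
Definition dot3 (x y : nat -> R) : R := x 0%nat * y 0%nat + x 1%nat * y 1%nat + x 2%nat * y 2%nat.
Definition dot4 (x y : nat -> R) : R := dot3 x y + x 3%nat * y 3%nat.

Definition cross3 (x y : nat -> R) : nat -> R := fun i =>
  match i with
  | 0%nat => x 1%nat * y 2%nat - x 2%nat * y 1%nat
  | 1%nat => x 2%nat * y 0%nat - x 0%nat * y 2%nat
  | 2%nat => x 0%nat * y 1%nat - x 1%nat * y 0%nat
  | _ => 0
  end.

Definition Ioo (a b : Rbar) (x : R) : Prop := Rbar_lt a x /\ Rbar_lt x b.

Definition smooth_on (D : R -> Prop) (h : R -> R) : Prop :=
  forall (n : nat) (x : R), D x -> ex_derive (Derive_n h n) x.

Definition dvec (w : R -> nat -> R) (t : R) : nat -> R :=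
  fun i => Derive (fun s => w s i) t.

(* Frenet-type frame of a curve l on S^2(1): t = l', n = l x t, so that
   {t, n, l} is an (positively oriented) orthonormal frame *)
Definition tan_sph (l : R -> nat -> R) : R -> nat -> R := dvec l.
Definition nor_sph (l : R -> nat -> R) : R -> nat -> R :=
  fun v => cross3 (l v) (tan_sph l v).

Definition kappa_m (f g : R -> R) (u : R) : R :=
  Derive f u * Derive (Derive g) u - Derive g u * Derive (Derive f) u.

Definition meridian (f g : R -> R) (l : R -> nat -> R) : R -> R -> nat -> R :=
  fun u v i => match i with
               | 0%nat | 1%nat | 2%nat => f u * l v i
               | 3%nat => g u
               | _ => 0
               end.

Section Surface.
Variable z : R -> R -> nat -> R.

Definition z_u (u v : R) : nat -> R := fun i => Derive (fun s => z s v i) u.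
Definition z_v (u v : R) : nat -> R := fun i => Derive (fun s => z u s i) v.
Definition z_uu (u v : R) : nat -> R := fun i => Derive (fun s => z_u s v i) u.
Definition z_uv (u v : R) : nat -> R := fun i => Derive (fun s => z_u u s i) v.
Definition z_vv (u v : R) : nat -> R := fun i => Derive (fun s => z_v u s i) v.

Definition fE (u v : R) : R := dot4 (z_u u v) (z_u u v).
Definition fF (u v : R) : R := dot4 (z_u u v) (z_v u v).
Definition fG (u v : R) : R := dot4 (z_v u v) (z_v u v).

(* normal component of w at the point (u,v): w minus its orthogonal
   projection onto span{z_u, z_v} *)
Definition normal_part (u v : R) (w : nat -> R) : nat -> R :=
  let E := fE u v in let F := fF u v in let G := fG u v in
  let D := E * G - F * F in
  let al := (G * dot4 w (z_u u v) - F * dot4 w (z_v u v)) / D in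
  let be := (E * dot4 w (z_v u v) - F * dot4 w (z_u u v)) / D in
  fun i => w i - al * z_u u v i - be * z_v u v i.

Definition sig_uu (u v : R) := normal_part u v (z_uu u v).
Definition sig_uv (u v : R) := normal_part u v (z_uv u v).
Definition sig_vv (u v : R) := normal_part u v (z_vv u v).

(* mean curvature vector H = (1/2) tr sigma (trace w.r.t. the induced metric) *)
Definition mean_curv (u v : R) : nat -> R := fun i =>
  (fG u v * sig_uu u v i - 2 * fF u v * sig_uv u v i + fE u v * sig_vv u v i)
  / (2 * (fE u v * fG u v - fF u v * fF u v)).

Definition norm_H (u v : R) : R := sqrt (dot4 (mean_curv u v) (mean_curv u v)).
End Surface.

(* Main.v *)
Require Import Defs.
From Stdlib Require Import Reals Lra Lia.
From Coquelicot Require Import Coquelicot.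
Open Scope R_scope.

Section Comp.
Variables (f g : R -> R) (l : R -> nat -> R).
Let Z := meridian f g l.

Lemma zu_eq u v i : z_u Z u v i =
  match i with O | S O | S (S O) => Derive f u * l v i | S (S (S O)) => Derive g u | _ => 0 end.
Proof.
unfold z_u, Z, meridian.
destruct i as [|[|[|[|i]]]]; try apply Derive_scal_l; try reflexivity; apply Derive_const.
Qed.

Lemma zv_eq u v i : z_v Z u v i =
  match i with O | S O | S (S O) => f u * Derive (fun s => l s i) v | _ => 0 end.
Proof.
unfold z_v, Z, meridian.
destruct i as [|[|[|[|i]]]]; try apply Derive_scal; apply Derive_const.
Qed.

Lemma zuu_eq u v i : z_uu Z u v i =
  match i with O | S O | S (S O) => Derive (Derive f) u * l v i | S (S (S O)) => Derive (Derive g) u | _ => 0 end.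
Proof.
unfold z_uu. rewrite (Derive_ext _ (fun s => match i with O | S O | S (S O) => Derive f s * l v i | S (S (S O)) => Derive g s | _ => 0 end)).
2: intro; apply zu_eq.
destruct i as [|[|[|[|i]]]]; try apply Derive_scal_l; try reflexivity; apply Derive_const.
Qed.

Lemma zuv_eq u v i : z_uv Z u v i =
  match i with O | S O | S (S O) => Derive f u * Derive (fun s => l s i) v | _ => 0 end.
Proof.
unfold z_uv. rewrite (Derive_ext _ (fun s => match i with O | S O | S (S O) => Derive f u * l s i | S (S (S O)) => Derive g u | _ => 0 end)).
2: intro; apply zu_eq.
destruct i as [|[|[|[|i]]]]; try apply Derive_scal; apply Derive_const.
Qed.

Lemma zvv_eq u v i : z_vv Z u v i =
  match i with O | S O | S (S O) => f u * dvec (tan_sph l) v i | _ => 0 end.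
Proof.
unfold z_vv. rewrite (Derive_ext _ (fun s => match i with O | S O | S (S O) => f u * Derive (fun s => l s i) s | _ => 0 end)).
2: intro; apply zv_eq.
destruct i as [|[|[|[|i]]]]; try apply Derive_scal; apply Derive_const.
Qed.
End Comp.

Lemma H2_eq (f g : R -> R) (l : R -> nat -> R) (K u v : R) :
  f u <> 0 ->
  dot3 (l v) (l v) = 1 -> dot3 (tan_sph l v) (tan_sph l v) = 1 ->
  dot3 (l v) (tan_sph l v) = 0 ->
  (forall i, (i < 3)%nat -> dvec (tan_sph l) v i = K * nor_sph l v i - l v i) ->
  Derive f u ^ 2 + Derive g u ^ 2 = 1 ->
  Derive f u * Derive (Derive f) u + Derive g u * Derive (Derive g) u = 0 ->
  dot4 (mean_curv (meridian f g l) u v) (mean_curv (meridian f g l) u v) =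
  (K ^ 2 + ((f u * Derive (Derive f) u + Derive f u ^ 2 - 1) ^ 2
           + (f u * Derive (Derive g) u + Derive f u * Derive g u) ^ 2)) / (4 * f u ^ 2).
Proof.
intros Hf HL HT HLT Htt HF HFF.

assert (T0 := Htt 0%nat ltac:(lia)). assert (T1 := Htt 1%nat ltac:(lia)). assert (T2 := Htt 2%nat ltac:(lia)).
clear Htt.
unfold nor_sph, cross3 in T0, T1, T2.
unfold dot3, tan_sph, dvec in HL, HT, HLT, T0, T1, T2.
set (F0 := f u) in *. set (F1 := Derive f u) in *. set (F2 := Derive (Derive f) u) in *.
set (G1 := Derive g u) in *. set (G2 := Derive (Derive g) u) in *.
set (L0 := l v 0%nat) in *. set (L1 := l v 1%nat) in *. set (L2 := l v 2%nat) in *.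
set (t0 := Derive (fun s => l s 0%nat) v) in *.
set (t1 := Derive (fun s => l s 1%nat) v) in *.
set (t2 := Derive (fun s => l s 2%nat) v) in *.
assert (HE : fE (meridian f g l) u v = 1).
{ unfold fE, dot4, dot3. rewrite !zu_eq. fold F1 G1 L0 L1 L2.
  replace (F1 * L0 * (F1 * L0) + F1 * L1 * (F1 * L1) + F1 * L2 * (F1 * L2) + G1 * G1)
    with (F1^2 * (L0 * L0 + L1 * L1 + L2 * L2) + G1^2) by ring. rewrite HL. lra. }
assert (HFf : fF (meridian f g l) u v = 0).
{ unfold fF, dot4, dot3. rewrite !zu_eq, !zv_eq. fold F0 F1 G1 L0 L1 L2 t0 t1 t2.
  replace (F1 * L0 * (F0 * t0) + F1 * L1 * (F0 * t1) + F1 * L2 * (F0 * t2) + G1 * 0)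
    with (F1 * F0 * (L0 * t0 + L1 * t1 + L2 * t2)) by ring. rewrite HLT. ring. }
assert (HG : fG (meridian f g l) u v = F0^2).
{ unfold fG, dot4, dot3. rewrite !zv_eq. fold F0 t0 t1 t2.
  replace (F0 * t0 * (F0 * t0) + F0 * t1 * (F0 * t1) + F0 * t2 * (F0 * t2) + 0 * 0)
    with (F0^2 * (t0 * t0 + t1 * t1 + t2 * t2)) by ring. rewrite HT. ring. }
assert (HuuU : dot4 (z_uu (meridian f g l) u v) (z_u (meridian f g l) u v) = 0).
{ unfold dot4, dot3. rewrite !zuu_eq, !zu_eq. fold F1 F2 G1 G2 L0 L1 L2.
  replace (F2 * L0 * (F1 * L0) + F2 * L1 * (F1 * L1) + F2 * L2 * (F1 * L2) + G2 * G1)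
   with (F1 * F2 * (L0 * L0 + L1 * L1 + L2 * L2) + G1 * G2) by ring. rewrite HL. lra. }
assert (HuuV : dot4 (z_uu (meridian f g l) u v) (z_v (meridian f g l) u v) = 0).
{ unfold dot4, dot3. rewrite !zuu_eq, !zv_eq. fold F0 F2 G2 L0 L1 L2 t0 t1 t2.
  replace (F2 * L0 * (F0 * t0) + F2 * L1 * (F0 * t1) + F2 * L2 * (F0 * t2) + G2 * 0)
   with (F2 * F0 * (L0 * t0 + L1 * t1 + L2 * t2)) by ring. rewrite HLT. ring. }
assert (HvvU : dot4 (z_vv (meridian f g l) u v) (z_u (meridian f g l) u v) = - (F0 * F1)).
{ unfold dot4, dot3. rewrite !zvv_eq, !zu_eq. unfold tan_sph, dvec. rewrite T0, T1, T2.
  fold F0 F1 G1 L0 L1 L2 t0 t1 t2.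
  replace (- (F0 * F1)) with (- (F0 * F1) * (L0 * L0 + L1 * L1 + L2 * L2)) by (rewrite HL; ring).
  ring. }
assert (HvvV : dot4 (z_vv (meridian f g l) u v) (z_v (meridian f g l) u v) = 0).
{ unfold dot4, dot3. rewrite !zvv_eq, !zv_eq. unfold tan_sph, dvec. rewrite T0, T1, T2.
  fold F0 t0 t1 t2 L0 L1 L2.
  transitivity (- F0 * F0 * (L0 * t0 + L1 * t1 + L2 * t2)). { unfold nor_sph, cross3; ring. }
  rewrite HLT; ring. }
set (c1 := (F0 * F2 + F1 ^ 2 - 1) / (2 * F0)).
set (c2 := K / (2 * F0)).
set (c3 := (F0 * G2 + F1 * G1) / (2 * F0)).
set (N0 := L1 * t2 - L2 * t1). set (N1 := L2 * t0 - L0 * t2). set (N2 := L0 * t1 - L1 * t0).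
assert (Hm0 : mean_curv (meridian f g l) u v 0%nat = c1 * L0 + c2 * N0).
{ unfold mean_curv, sig_uu, sig_uv, sig_vv, normal_part. rewrite HE, HFf, HG, HuuU, HuuV, HvvU, HvvV.
  rewrite !zuu_eq, !zvv_eq, !zu_eq, !zv_eq. unfold tan_sph, dvec. rewrite T0.
  fold F0 F1 F2 G1 G2 L0 L1 L2 t0 t1 t2. unfold c1, c2, N0. field. auto. }
assert (Hm1 : mean_curv (meridian f g l) u v 1%nat = c1 * L1 + c2 * N1).
{ unfold mean_curv, sig_uu, sig_uv, sig_vv, normal_part. rewrite HE, HFf, HG, HuuU, HuuV, HvvU, HvvV.
  rewrite !zuu_eq, !zvv_eq, !zu_eq, !zv_eq. unfold tan_sph, dvec. rewrite T1.
  fold F0 F1 F2 G1 G2 L0 L1 L2 t0 t1 t2. unfold c1, c2, N1. field. auto. }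
assert (Hm2 : mean_curv (meridian f g l) u v 2%nat = c1 * L2 + c2 * N2).
{ unfold mean_curv, sig_uu, sig_uv, sig_vv, normal_part. rewrite HE, HFf, HG, HuuU, HuuV, HvvU, HvvV.
  rewrite !zuu_eq, !zvv_eq, !zu_eq, !zv_eq. unfold tan_sph, dvec. rewrite T2.
  fold F0 F1 F2 G1 G2 L0 L1 L2 t0 t1 t2. unfold c1, c2, N2. field. auto. }
assert (Hm3 : mean_curv (meridian f g l) u v 3%nat = c3).
{ unfold mean_curv, sig_uu, sig_uv, sig_vv, normal_part. rewrite HE, HFf, HG, HuuU, HuuV, HvvU, HvvV.
  rewrite !zuu_eq, !zvv_eq, !zu_eq, !zv_eq.
  fold F0 F1 F2 G1 G2. unfold c3. field. auto. }
assert (LN : L0 * N0 + L1 * N1 + L2 * N2 = 0) by (unfold N0, N1, N2; ring).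
assert (NN : N0 * N0 + N1 * N1 + N2 * N2 = 1).
{ transitivity ((L0 * L0 + L1 * L1 + L2 * L2) * (t0 * t0 + t1 * t1 + t2 * t2) - (L0 * t0 + L1 * t1 + L2 * t2)^2).
  unfold N0, N1, N2; ring. rewrite HL, HT, HLT. ring. }
unfold dot4, dot3. rewrite Hm0, Hm1, Hm2, Hm3.
transitivity (c1^2 * (L0 * L0 + L1 * L1 + L2 * L2) + 2 * c1 * c2 * (L0 * N0 + L1 * N1 + L2 * N2)
   + c2^2 * (N0 * N0 + N1 * N1 + N2 * N2) + c3 ^ 2). ring.
rewrite HL, LN, NN. unfold c1, c2, c3. field. auto.
Qed.

Lemma Ioo_open a b x : Ioo a b x -> locally x (Ioo a b).
Proof.
intro H. apply (@open_and R_UniformSpace (fun u : R => Rbar_lt a u) (fun u : R => Rbar_lt u b)).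
apply open_Rbar_gt. apply open_Rbar_lt. exact H.
Qed.

Lemma Ioo_ne a b : Rbar_lt a b -> exists x, Ioo a b x.
Proof.
unfold Ioo. destruct a as [a| |], b as [b| |]; simpl; intro H; try contradiction.
- exists ((a+b)/2). simpl. lra.
- exists (a+1). simpl. lra.
- exists (b-1). simpl. lra.
- exists 0. simpl. auto.
Qed.

Lemma Ioo_conv a b x y z : Ioo a b x -> Ioo a b y -> x <= z <= y -> Ioo a b z.
Proof.
unfold Ioo. destruct a as [a| |], b as [b| |]; simpl; intros; lra.
Qed.

Lemma sq_deriv (h : R -> R) (x : R) :
  ex_derive h x -> is_derive (fun s => h s * h s) x (2 * (h x * Derive h x)).
Proof.
intro H. auto_derive. auto. change (fun x0 => h x0) with h. ring.
Qed.

Lemma deriv_sq2 (h : R -> R) (x : R) :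
  ex_derive h x -> is_derive (fun s => h s ^ 2) x (2 * (h x * Derive h x)).
Proof.
intro H. auto_derive. auto. change (fun x0 => h x0) with h. ring.
Qed.

Lemma const_deriv0 (D : R -> Prop) (h : R -> R) (c x dv : R) :
  locally x D -> (forall y, D y -> h y = c) -> is_derive h x dv -> dv = 0.
Proof.
intros HD Hc Hd.
assert (H0 : is_derive h x 0).
{ apply (is_derive_ext_loc (fun _ => c)). apply (filter_imp D). intros y Hy. symmetry. auto. auto.
  auto_derive; auto. }
rewrite <- (is_derive_unique _ _ _ Hd). apply is_derive_unique. exact H0.
Qed.

Lemma sum3_deriv (h0 h1 h2 : R -> R) x : ex_derive h0 x -> ex_derive h1 x -> ex_derive h2 x ->
  is_derive (fun s => h0 s * h0 s + h1 s * h1 s + h2 s * h2 s) x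
    (2 * (h0 x * Derive h0 x + h1 x * Derive h1 x + h2 x * Derive h2 x)).
Proof.
intros. auto_derive. repeat split; auto. change (fun x => h0 x) with h0. change (fun x => h1 x) with h1.
change (fun x => h2 x) with h2. ring.
Qed.

Lemma lt_orth (ja jb : Rbar) (l : R -> nat -> R) :
  (forall i, (i < 3)%nat -> smooth_on (Ioo ja jb) (fun v => l v i)) ->
  (forall v, Ioo ja jb v -> dot3 (l v) (l v) = 1) ->
  forall v, Ioo ja jb v -> dot3 (l v) (tan_sph l v) = 0.
Proof.
intros Hs Hl v Hv.
assert (E0 : ex_derive (fun s => l s 0%nat) v) by exact (Hs 0%nat ltac:(lia) 0%nat v Hv).
assert (E1 : ex_derive (fun s => l s 1%nat) v) by exact (Hs 1%nat ltac:(lia) 0%nat v Hv).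
assert (E2 : ex_derive (fun s => l s 2%nat) v) by exact (Hs 2%nat ltac:(lia) 0%nat v Hv).
assert (Hd : is_derive (fun s => dot3 (l s) (l s)) v (2 * dot3 (l v) (tan_sph l v))).
{ exact (sum3_deriv _ _ _ v E0 E1 E2). }
assert (H := const_deriv0 _ _ _ _ _ (Ioo_open _ _ _ Hv) Hl Hd). lra.
Qed.

Lemma ff_orth (ia ib : Rbar) (f g : R -> R) :
  smooth_on (Ioo ia ib) f -> smooth_on (Ioo ia ib) g ->
  (forall u, Ioo ia ib u -> Derive f u ^ 2 + Derive g u ^ 2 = 1) ->
  forall u, Ioo ia ib u ->
  Derive f u * Derive (Derive f) u + Derive g u * Derive (Derive g) u = 0.
Proof.
intros Hf Hg H1 u Hu.
assert (E0 : ex_derive (Derive f) u) by exact (Hf 1%nat u Hu).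
assert (E1 : ex_derive (Derive g) u) by exact (Hg 1%nat u Hu).
assert (Hd : is_derive (fun s => Derive f s ^ 2 + Derive g s ^ 2) u
   (2 * (Derive f u * Derive (Derive f) u + Derive g u * Derive (Derive g) u))).
{ auto_derive. auto. change (fun x => Derive f x) with (Derive f).
  change (fun x => Derive g x) with (Derive g). ring. }
assert (H := const_deriv0 _ _ _ _ _ (Ioo_open _ _ _ Hu) H1 Hd). lra.
Qed.

Lemma loc_nz (h : R -> R) x : continuity_pt h x -> h x <> 0 -> locally x (fun s => h s <> 0).
Proof.
intros Hc Hn. apply continuity_pt_filterlim in Hc.
destruct (Rlt_or_le 0 (h x)) as [Hp|Hp].
- assert (Hl : locally (h x) (fun y : R => Rbar_lt 0 y)) by (apply open_Rbar_gt; exact Hp).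
  specialize (Hc _ Hl). apply (filter_imp (fun s => Rbar_lt 0 (h s))); [|exact Hc].
  simpl; intros; lra.
- assert (Hl : locally (h x) (fun y : R => Rbar_lt y 0)) by (apply open_Rbar_lt; simpl; lra).
  specialize (Hc _ Hl). apply (filter_imp (fun s => Rbar_lt (h s) 0)); [|exact Hc].
  simpl; intros; lra.
Qed.

Lemma ivt2 (E : R -> R) x y : x < y -> (forall a, x <= a <= y -> continuity_pt E a) ->
  E x * E y < 0 -> exists z, x <= z <= y /\ E z = 0.
Proof.
intros Hxy Hc Hs.
destruct (Rlt_or_le (E x) 0) as [Hx|Hx].
- assert (0 < E y) by nra.
  destruct (Ranalysis5.IVT_interv E x y Hc Hxy Hx H) as [z Hz]. eauto.
- assert (E y < 0) by nra. assert (E x <> 0) by (intro; rewrite H0 in Hs; lra).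
  assert (Hx' : (fun s => - E s) x < 0) by (simpl; lra).
  assert (Hy' : 0 < (fun s => - E s) y) by (simpl; lra).
  destruct (Ranalysis5.IVT_interv (fun s => - E s) x y) as [z Hz]; auto.
  intros a Ha. apply (continuity_pt_opp E a (Hc a Ha)).
  exists z. split. tauto. destruct Hz as [_ Hz]. lra.
Qed.

Lemma sign_const (ja jb : Rbar) (E : R -> R) (c v0 : R) :
  (forall x, Ioo ja jb x -> continuity_pt E x) ->
  (forall x, Ioo ja jb x -> E x <> 0) ->
  (forall x, Ioo ja jb x -> E x ^ 2 = c) ->
  Ioo ja jb v0 -> forall v, Ioo ja jb v -> E v = E v0.
Proof.
intros Hc Hn Hsq Hv0 v Hv.
assert (Hv2 : E v ^ 2 = E v0 ^ 2) by (rewrite Hsq, Hsq; auto).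
assert (H0 := Hn v0 Hv0). assert (H1 := Hn v Hv).
destruct (Req_dec (E v) (E v0)) as [e|ne]; auto.
assert (Hm : E v = - E v0) by nra.
exfalso.
assert (Hneg : E v * E v0 < 0) by (rewrite Hm; assert (0 < E v0 ^ 2) by (apply pow2_gt_0; auto); nra).
destruct (Rlt_or_le v v0) as [Hl|Hl].
- destruct (ivt2 E v v0 Hl) as [z [Hz Ez]].
  intros a Ha. apply Hc. apply (Ioo_conv _ _ v v0); auto.
  auto. apply (Hn z). apply (Ioo_conv _ _ v v0); auto. auto.
- destruct (Rle_lt_or_eq_dec _ _ Hl) as [Hl'|Hl'].
  + destruct (ivt2 E v0 v Hl') as [z [Hz Ez]].
    intros a Ha. apply Hc. apply (Ioo_conv _ _ v0 v); auto.
    nra. apply (Hn z). apply (Ioo_conv _ _ v0 v); auto. auto.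
  + subst. lra.
Qed.

Lemma E_cont (p0 p1 p2 q0 q1 q2 r0 r1 r2 : R -> R) x :
  ex_derive p0 x -> ex_derive p1 x -> ex_derive p2 x ->
  ex_derive q0 x -> ex_derive q1 x -> ex_derive q2 x ->
  ex_derive r0 x -> ex_derive r1 x -> ex_derive r2 x ->
  continuity_pt (fun s => (r0 s + p0 s) * (p1 s * q2 s - p2 s * q1 s)
                        + (r1 s + p1 s) * (p2 s * q0 s - p0 s * q2 s)
                        + (r2 s + p2 s) * (p0 s * q1 s - p1 s * q0 s)) x.
Proof.
intros. apply continuity_pt_filterlim. match goal with |- filterlim ?F _ _ => apply (@ex_derive_continuous R_AbsRing R_NormedModule F x) end.
auto_derive. repeat split; auto.
Qed.

Lemma P_cont (p q r w e : R -> R) (a b x : R) :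
  ex_derive p x -> ex_derive q x -> ex_derive r x -> ex_derive w x -> ex_derive e x ->
  continuity_pt (fun s => (p s * q s + r s ^ 2 - 1) ^ 2 + (p s * w s + r s * e s) ^ 2
                          - (4 * a ^ 2 * p s ^ 2 - b ^ 2)) x.
Proof.
intros. apply continuity_pt_filterlim. match goal with |- filterlim ?F _ _ => apply (@ex_derive_continuous R_AbsRing R_NormedModule F x) end.
auto_derive. repeat split; auto.
Qed.

Theorem proposition5p2
  (ia ib ja jb : Rbar) (f g : R -> R) (l : R -> nat -> R) (kappa : R -> R) (a : R) :
  Rbar_lt ia ib -> Rbar_lt ja jb ->
  smooth_on (Ioo ia ib) f -> smooth_on (Ioo ia ib) g ->
  (forall u, Ioo ia ib u -> Derive f u ^ 2 + Derive g u ^ 2 = 1) ->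
  (forall u, Ioo ia ib u -> f u <> 0) ->
  (forall i, (i < 3)%nat -> smooth_on (Ioo ja jb) (fun v => l v i)) ->
  (forall v, Ioo ja jb v -> dot3 (l v) (l v) = 1) ->
  (forall v, Ioo ja jb v -> dot3 (tan_sph l v) (tan_sph l v) = 1) ->
  (* kappa is the spherical curvature: t' = kappa n - l, n' = - kappa t *)
  (forall v, Ioo ja jb v -> forall i, (i < 3)%nat ->
      dvec (tan_sph l) v i = kappa v * nor_sph l v i - l v i) ->
  (forall v, Ioo ja jb v -> forall i, (i < 3)%nat ->
      dvec (nor_sph l) v i = - kappa v * tan_sph l v i) ->
  (* general class *)
  (forall u v, Ioo ia ib u -> Ioo ja jb v -> kappa_m f g u * kappa v <> 0) ->
  0 < a ->
  ((forall u v, Ioo ia ib u -> Ioo ja jb v -> norm_H (meridian f g l) u v = a) <->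
   exists b : R, b <> 0 /\
     (forall v, Ioo ja jb v -> kappa v = b) /\
     (forall u, Ioo ia ib u ->
        (1 - Derive f u ^ 2 - f u * Derive (Derive f) u) ^ 2
        = (1 - Derive f u ^ 2) * (4 * a ^ 2 * f u ^ 2 - b ^ 2))).
Proof.
intros Hab Hjab Hsf Hsg Hfg Hf0 Hsl Hl Ht Htt Hnn Hgen Ha.
destruct (Ioo_ne _ _ Hab) as [u0 Hu0].
destruct (Ioo_ne _ _ Hjab) as [v0 Hv0].
assert (HLT := lt_orth _ _ _ Hsl Hl).
assert (HFF := ff_orth _ _ _ _ Hsf Hsg Hfg).
set (P := fun u => (f u * Derive (Derive f) u + Derive f u ^ 2 - 1) ^ 2
           + (f u * Derive (Derive g) u + Derive f u * Derive g u) ^ 2).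
assert (Hnorm : forall u v, Ioo ia ib u -> Ioo ja jb v ->
   norm_H (meridian f g l) u v = sqrt ((kappa v ^ 2 + P u) / (4 * f u ^ 2))).
{ intros u v Hu Hv. unfold norm_H. rewrite (H2_eq f g l (kappa v) u v); auto. }
assert (Hkv : forall v, Ioo ja jb v -> kappa v <> 0).
{ intros v Hv e. apply (Hgen u0 v Hu0 Hv). rewrite e. ring. }
assert (Hkm : forall u, Ioo ia ib u -> kappa_m f g u <> 0).
{ intros u Hu e. apply (Hgen u v0 Hu Hv0). rewrite e. ring. }
assert (Hkey : forall u, Ioo ia ib u ->
   Derive g u ^ 2 * P u = (1 - Derive f u ^ 2 - f u * Derive (Derive f) u) ^ 2).
{ intros u Hu. assert (H1 := Hfg u Hu). assert (H2 := HFF u Hu). unfold P.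
  set (F0 := f u) in *. set (F1 := Derive f u) in *. set (F2 := Derive (Derive f) u) in *.
  set (G1 := Derive g u) in *. set (G2 := Derive (Derive g) u) in *.
  assert (HG2 : G1 * G2 = - (F1 * F2)) by lra.
  assert (HG1 : G1 ^ 2 = 1 - F1 ^ 2) by lra.
  transitivity (G1 ^ 2 * (F0 * F2 + F1 ^ 2 - 1) ^ 2 + (F0 * (G1 * G2) + F1 * G1 ^ 2) ^ 2). ring.
  rewrite HG2, HG1. ring. }
assert (HPpos : forall u, 0 <= P u).
{ intro u. unfold P. apply Rplus_le_le_0_compat; apply pow2_ge_0. }
split.
- intro HN.
  assert (Heq : forall u v, Ioo ia ib u -> Ioo ja jb v -> kappa v ^ 2 + P u = 4 * a ^ 2 * f u ^ 2).
  { intros u v Hu Hv. assert (H := HN u v Hu Hv). rewrite Hnorm in H by auto.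
    assert (Hf := Hf0 u Hu).
    assert (Hf2 : 0 < f u ^ 2) by (apply pow2_gt_0; auto).
    assert (Hx : 0 <= (kappa v ^ 2 + P u) / (4 * f u ^ 2)).
    { apply Rdiv_le_0_compat. assert (0 <= kappa v ^ 2) by apply pow2_ge_0. specialize (HPpos u). lra. lra. }
    assert (Hs := sqrt_sqrt _ Hx). rewrite H in Hs.
    transitivity ((kappa v ^ 2 + P u) / (4 * f u ^ 2) * (4 * f u ^ 2)). field. auto.
    rewrite <- Hs. ring. }
  exists (kappa v0). split. auto. split.
  + set (E := fun s => (Derive (fun s1 => Derive (fun s0 => l s0 0%nat) s1) s + l s 0%nat) * (l s 1%nat * Derive (fun s0 => l s0 2%nat) s - l s 2%nat * Derive (fun s0 => l s0 1%nat) s)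
                    + (Derive (fun s1 => Derive (fun s0 => l s0 1%nat) s1) s + l s 1%nat) * (l s 2%nat * Derive (fun s0 => l s0 0%nat) s - l s 0%nat * Derive (fun s0 => l s0 2%nat) s)
                    + (Derive (fun s1 => Derive (fun s0 => l s0 2%nat) s1) s + l s 2%nat) * (l s 0%nat * Derive (fun s0 => l s0 1%nat) s - l s 1%nat * Derive (fun s0 => l s0 0%nat) s)).
    assert (HE : forall v, Ioo ja jb v -> kappa v = E v).
    { intros v Hv. assert (T0 := Htt v Hv 0%nat ltac:(lia)). assert (T1 := Htt v Hv 1%nat ltac:(lia)).
      assert (T2 := Htt v Hv 2%nat ltac:(lia)). unfold tan_sph, dvec, nor_sph, cross3 in T0, T1, T2.
      unfold E. rewrite T0, T1, T2.
      replace (kappa v) with (kappa v * (dot3 (l v) (l v) * dot3 (tan_sph l v) (tan_sph l v)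
          - dot3 (l v) (tan_sph l v) ^ 2)) at 1 by (rewrite Hl, Ht, HLT; auto; ring).
      unfold dot3, tan_sph, dvec. ring. }
    intros v Hv. rewrite (HE v Hv), (HE v0 Hv0).
    apply (sign_const ja jb E (4 * a ^ 2 * f u0 ^ 2 - P u0)); auto.
    * intros x Hx. unfold E. apply E_cont.
      all: try exact (Hsl 0%nat ltac:(lia) 0%nat x Hx).
      all: try exact (Hsl 1%nat ltac:(lia) 0%nat x Hx).
      all: try exact (Hsl 2%nat ltac:(lia) 0%nat x Hx).
      all: try exact (Hsl 0%nat ltac:(lia) 1%nat x Hx).
      all: try exact (Hsl 1%nat ltac:(lia) 1%nat x Hx).
      all: try exact (Hsl 2%nat ltac:(lia) 1%nat x Hx).
      all: try exact (Hsl 0%nat ltac:(lia) 2%nat x Hx).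
      all: try exact (Hsl 1%nat ltac:(lia) 2%nat x Hx).
      all: try exact (Hsl 2%nat ltac:(lia) 2%nat x Hx).
    * intros x Hx. rewrite <- HE by auto. auto.
    * intros x Hx. rewrite <- HE by auto. assert (H := Heq u0 x Hu0 Hx). lra.
  + intros u Hu. rewrite <- Hkey by auto. assert (H := Heq u v0 Hu Hv0).
    assert (H1 := Hfg u Hu). 
    replace (P u) with (4 * a ^ 2 * f u ^ 2 - kappa v0 ^ 2) by lra.
    replace (1 - Derive f u ^ 2) with (Derive g u ^ 2) by lra. ring.
- intros [b [Hb [Hkb Hfe]]].
  assert (HPg : forall u, Ioo ia ib u -> Derive g u <> 0 -> P u = 4 * a ^ 2 * f u ^ 2 - b ^ 2).
  { intros u Hu Hg. assert (H := Hkey u Hu). rewrite Hfe in H by auto.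
    assert (H1 := Hfg u Hu).
    replace (1 - Derive f u ^ 2) with (Derive g u ^ 2) in H by lra.
    apply Rmult_eq_reg_l with (Derive g u ^ 2). lra. apply pow_nonzero. auto. }
  assert (HPall : forall u, Ioo ia ib u -> P u = 4 * a ^ 2 * f u ^ 2 - b ^ 2).
  { intros u Hu. destruct (Req_dec (Derive g u) 0) as [Hg0|Hg0]; [|auto].
    destruct (Req_dec (P u) (4 * a ^ 2 * f u ^ 2 - b ^ 2)) as [e|ne]; auto. exfalso.
    set (h := fun s => (f s * Derive (Derive f) s + Derive f s ^ 2 - 1) ^ 2
           + (f s * Derive (Derive g) s + Derive f s * Derive g s) ^ 2 - (4 * a ^ 2 * f s ^ 2 - b ^ 2)).
    assert (Hc : continuity_pt h u).
    { apply P_cont.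
      exact (Hsf 0%nat u Hu). exact (Hsf 2%nat u Hu). exact (Hsf 1%nat u Hu).
      exact (Hsg 2%nat u Hu). exact (Hsg 1%nat u Hu). }
    assert (Hn : h u <> 0) by (unfold h; fold (P u); lra).
    assert (Hloc := loc_nz h u Hc Hn).
    assert (Hloc2 : locally u (fun s => Derive g s = 0)).
    { apply (filter_imp (fun s => h s <> 0 /\ Ioo ia ib s)).
      - intros s [H1 H2]. destruct (Req_dec (Derive g s) 0) as [e|n]; auto. exfalso. apply H1.
        unfold h. fold (P s). rewrite (HPg s H2 n). ring.
      - apply filter_and; auto. apply Ioo_open; auto. }
    assert (HG2 : Derive (Derive g) u = 0).
    { rewrite (Derive_ext_loc _ (fun _ => 0) u Hloc2). apply Derive_const. }
    apply (Hkm u Hu). unfold kappa_m. rewrite Hg0, HG2. ring. }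
  intros u v Hu Hv. rewrite Hnorm, (Hkb v Hv) by auto. rewrite (HPall u Hu).
  assert (Hf := Hf0 u Hu).
  replace ((b ^ 2 + (4 * a ^ 2 * f u ^ 2 - b ^ 2)) / (4 * f u ^ 2)) with (a ^ 2) by (field; auto).
  apply sqrt_pow2. lra.
Qed.
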